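(* Let $k$ be a commutative ring, $G$ a group and $R$ a $G$-algebra. Then $R$ is principal (i.e. $R\cong\bar A$ as $G$-algebras for some $G$-graded $k$-algebra $A$) if and only if there is a group monomorphism $\mathcal T:G\hookrightarrow \mathrm{Aut}_*(R)$, $g\mapsto\mathcal T_g$, such that for every $g\in G$, $\mathcal T_g$ has left degree $g$. In particular, a $\mathbb Z$-algebra $R$ is principal if and only if $R$ has a $k$-algebra automorphism of degree $1$.
   Context: A $G$-algebra is a $k$-algebra $R$ (possibly without $1$) with $R=\bigoplus_{f,g\in G}R_{f,g}$ as $k$-modules, such that $R_{f,g}R_{g,h}\subseteq R_{f,h}$, $R_{f,g}R_{g',h}=0$ if $g\neq g'$, and each $R_{f,f}$ has an element $1_f$ acting as a right identity on every $R_{g,f}$ and a left identity on every $R_{f,g}$; a $\mathbb Z$-algebra is a $G$-algebra with $G=\mathbb Z$. Two $G$-algebras are isomorphic as $G$-algebras if there is a $k$-algebra isomorphism sending $1_f$ to $1_f$ for all $f$. A $k$-algebra (or $k$-module) map $\psi:R\to S$ of $G$-algebras is graded of (left) degree $h$ if $\psi(R_{f,g})\subseteq S_{hf,hg}$ for all $f,g$. $\mathrm{Aut}_*(R)$ denotes the group of $k$-algebra automorphisms of $R$ that are graded of left degree $g$ for some $g\in G$. For a $G$-graded $k$-algebra $A$, $\bar A$ is the $G$-algebra with $\bar A_{f,g}=A_{f^{-1}g}$ and multiplication induced from $A$. *)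

(* Defs.v *)
From HB Require Import structures.
From mathcomp Require Import all_boot all_order all_algebra.
From mathcomp Require Import monoid.
Set Implicit Arguments. Unset Strict Implicit. Unset Printing Implicit Defensive.
Import Order.TTheory GRing.Theory Num.Theory.
Local Open Scope ring_scope.

Section GAlgebras.
Variables (k : comPzRingType) (G : groupType).

Definition is_kalg_nonunital (R : lmodType k) (mul : R -> R -> R) : Prop :=
  [/\ (forall x y z, mul (x + y) z = mul x z + mul y z),
      (forall x y z, mul x (y + z) = mul x y + mul x z),
      (forall (a : k) x y, mul (a *: x) y = a *: mul x y),
      (forall (a : k) x y, mul x (a *: y) = a *: mul x y) &
      (forall x y z, mul x (mul y z) = mul (mul x y) z)].

Definition is_submod (R : lmodType k) (P : pred R) : Prop :=
  [/\ 0 \in P, (forall x y, x \in P -> y \in P -> x + y \in P) &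
      (forall (a : k) x, x \in P -> a *: x \in P)].

Definition is_direct_sum (I : eqType) (R : lmodType k) (P : I -> pred R) : Prop :=
  (forall x : R, exists (s : seq I) (y : I -> R),
      (forall i, i \in s -> y i \in P i) /\ x = \sum_(i <- s) y i) /\
  (forall (s : seq I) (y : I -> R), uniq s ->
      (forall i, i \in s -> y i \in P i) ->
      \sum_(i <- s) y i = 0 -> forall i, i \in s -> y i = 0).

(* A G-algebra: a k-algebra R (possibly without 1) with product [mul],
   R = (+)_{f,g} R_{f,g} (R_{f,g} = [C f g]) as k-modules,
   R_{f,g} R_{g,h} <= R_{f,h}, R_{f,g} R_{g',h} = 0 for g <> g',
   and [one f] = 1_f in R_{f,f} is a right identity on every R_{g,f} and a
   left identity on every R_{f,g}. *)
Definition is_Galgebra (R : lmodType k) (mul : R -> R -> R)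
    (C : G -> G -> pred R) (one : G -> R) : Prop :=
  is_kalg_nonunital mul /\
  (forall f g, is_submod (C f g)) /\
  is_direct_sum (fun p : G * G => C p.1 p.2) /\
  (forall f g h x y, x \in C f g -> y \in C g h -> mul x y \in C f h) /\
  (forall f g g' h x y, g != g' -> x \in C f g -> y \in C g' h -> mul x y = 0) /\
  (forall f, one f \in C f f /\
     (forall g x, x \in C g f -> mul x (one f) = x) /\
     (forall g x, x \in C f g -> mul (one f) x = x)).

(* k-algebra homomorphism (no unit condition: R need not have 1). *)
Definition is_kalg_morph (R S : lmodType k) (mulR : R -> R -> R)
    (mulS : S -> S -> S) (psi : R -> S) : Prop :=
  [/\ (forall x y, psi (x + y) = psi x + psi y),
      (forall (a : k) x, psi (a *: x) = a *: psi x) &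
      (forall x y, psi (mulR x y) = mulS (psi x) (psi y))].

Definition is_kalg_aut (R : lmodType k) (mulR : R -> R -> R) (psi : R -> R) : Prop :=
  is_kalg_morph mulR mulR psi /\ bijective psi.

Definition graded_of_degree (R S : lmodType k) (CR : G -> G -> pred R)
    (CS : G -> G -> pred S) (psi : R -> S) (h : G) : Prop :=
  forall f g x, x \in CR f g -> psi x \in CS (h * f)%g (h * g)%g.

Definition is_kalg (A : lmodType k) (mul : A -> A -> A) (one : A) : Prop :=
  [/\ is_kalg_nonunital mul, (forall x, mul one x = x) & (forall x, mul x one = x)].

Definition is_Ggraded_kalg (A : lmodType k) (mul : A -> A -> A) (one : A)
    (Ag : G -> pred A) : Prop :=
  [/\ is_kalg mul one, (forall g, is_submod (Ag g)), is_direct_sum Ag &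
      (forall g h x y, x \in Ag g -> y \in Ag h -> mul x y \in Ag (g * h)%g)].

(* Elements of \bar A = (+)_{f,g} \bar A_{f,g}, \bar A_{f,g} = A_{f^-1 g},
   represented as finitely supported families (z f g)_{f,g}. *)
Definition in_bar (A : lmodType k) (Ag : G -> pred A) (z : G -> G -> A) : Prop :=
  (exists s : seq (G * G), forall f g, (f, g) \notin s -> z f g = 0) /\
  (forall f g, z f g \in Ag (f^-1 * g)%g).

(* R is isomorphic as a G-algebra to \bar A, via phi : R -> \bar A:
   phi is a k-linear bijection onto \bar A, multiplicative for the product
   of \bar A (induced from A: (z z')_{f,h} = sum_g z_{f,g} z'_{g,h}), and
   sends 1_f to the unit 1_f of \bar A (1_A placed in slot (f,f)). *)
Definition Galg_iso_bar (R : lmodType k) (mulR : R -> R -> R)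
    (oneR : G -> R) (A : lmodType k) (mulA : A -> A -> A) (oneA : A)
    (Ag : G -> pred A) (phi : R -> G -> G -> A) : Prop :=
  (forall x y f g, phi (x + y) f g = phi x f g + phi y f g) /\
  (forall (a : k) x f g, phi (a *: x) f g = a *: phi x f g) /\
  (forall x y, (forall f g, phi x f g = phi y f g) -> x = y) /\
  (forall x, in_bar Ag (phi x)) /\
  (forall z, in_bar Ag z -> exists x, forall f g, phi x f g = z f g) /\
  (forall x y f h (s : seq G), uniq s ->
      (forall g, g \notin s -> phi x f g = 0) ->
      phi (mulR x y) f h = \sum_(g <- s) mulA (phi x f g) (phi y g h)) /\
  (forall f f' g', phi (oneR f) f' g' =
      if (f' == f) && (g' == f) then oneA else 0).

Definition principal (R : lmodType k) (mulR : R -> R -> R) (oneR : G -> R) : Prop :=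
  exists (A : lmodType k) (mulA : A -> A -> A) (oneA : A) (Ag : G -> pred A),
    is_Ggraded_kalg mulA oneA Ag /\
    exists phi : R -> G -> G -> A, Galg_iso_bar mulR oneR mulA oneA Ag phi.

End GAlgebras.

Definition Zgrp : Type := int.
HB.instance Definition _ := Choice.copy Zgrp int.
HB.instance Definition _ := isGroup.Build Zgrp
  (@addrA int) (@add0r int) (@addr0 int) (@addNr int) (@subrr int).
(* the integer 1, as an element of Zgrp (its group "1" is the integer 0) *)
Definition Zgrp_one : Zgrp := (1%:Z : int).

(* Main.v *)
Require Import Defs.
From HB Require Import structures.
From mathcomp Require Import all_boot all_order all_algebra.
From mathcomp Require Import monoid.
From mathcomp Require Import zify.
From Stdlib Require Import ClassicalEpsilon Classical.
Import GRing.Theory.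
Local Open Scope ring_scope.

Set Implicit Arguments. Unset Strict Implicit.

Section SumLemmas.
Variables (V : zmodType) (I : eqType).

Lemma sum_delta (s : seq I) (F : I -> V) j : uniq s ->
  \sum_(i <- s) (if i == j then F i else 0) = if j \in s then F j else 0.
Proof.
elim: s => [|a s IH] /=; first by rewrite big_nil.
case/andP=> nas us; rewrite big_cons IH // in_cons.
case: (eqVneq a j) => [aj|ne] /=; first subst a.
  by rewrite (negbTE nas) addr0.
by rewrite add0r.
Qed.

Lemma sum_restr (s t : seq I) (w : I -> V) :
  (forall i, i \notin t -> w i = 0) ->
  \sum_(i <- s) w i = \sum_(i <- filter (mem t) s) w i.
Proof.
move=> h; rewrite big_filter [in RHS]big_mkcond /=; apply: eq_bigr => i _.
by case: ifP => // /negbT /h.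
Qed.

Lemma sum_supp_eq (s1 s2 : seq I) (w : I -> V) : uniq s1 -> uniq s2 ->
  (forall i, i \notin s1 -> w i = 0) -> (forall i, i \notin s2 -> w i = 0) ->
  \sum_(i <- s1) w i = \sum_(i <- s2) w i.
Proof.
move=> u1 u2 h1 h2.
rewrite (sum_restr s1 h2) (sum_restr s2 h1).
apply: perm_big; apply: uniq_perm; rewrite ?filter_uniq //.
by move=> i; rewrite !mem_filter andbC.
Qed.

End SumLemmas.


Section GAlg.
Variables (k : comPzRingType) (G : groupType) (R : lmodType k)
  (mul : R -> R -> R) (C : G -> G -> pred R) (one : G -> R).
Hypothesis HR : is_Galgebra mul C one.

Lemma mulDl x y z : mul (x + y) z = mul x z + mul y z.
Proof. by case: HR => -[]. Qed.
Lemma mulDr x y z : mul x (y + z) = mul x y + mul x z.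
Proof. by case: HR => -[]. Qed.
Lemma mulZl a x y : mul (a *: x) y = a *: mul x y.
Proof. by case: HR => -[]. Qed.
Lemma mulZr a x y : mul x (a *: y) = a *: mul x y.
Proof. by case: HR => -[]. Qed.
Lemma mulA x y z : mul x (mul y z) = mul (mul x y) z.
Proof. by case: HR => -[]. Qed.
Lemma mul0l y : mul 0 y = 0.
Proof. by apply: (addrI (mul 0 y)); rewrite -mulDl !addr0. Qed.
Lemma mul0r y : mul y 0 = 0.
Proof. by apply: (addrI (mul y 0)); rewrite -mulDr !addr0. Qed.
Lemma mul_suml (I : Type) (s : seq I) (F : I -> R) y :
  mul (\sum_(i <- s) F i) y = \sum_(i <- s) mul (F i) y.
Proof.
elim: s => [|a s IH]; first by rewrite !big_nil mul0l.
by rewrite !big_cons mulDl IH.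
Qed.
Lemma mul_sumr (I : Type) (s : seq I) (F : I -> R) y :
  mul y (\sum_(i <- s) F i) = \sum_(i <- s) mul y (F i).
Proof.
elim: s => [|a s IH]; first by rewrite !big_nil mul0r.
by rewrite !big_cons mulDr IH.
Qed.

Lemma Csub f g : is_submod (C f g).
Proof. by case: HR => _ []. Qed.
Lemma C0 f g : 0 \in C f g.
Proof. by case: (Csub f g). Qed.
Lemma CD f g x y : x \in C f g -> y \in C f g -> x + y \in C f g.
Proof. by case: (Csub f g) => _ H1 H2; auto. Qed.
Lemma CZ f g a x : x \in C f g -> a *: x \in C f g.
Proof. by case: (Csub f g) => _ H1 H2; auto. Qed.
Lemma Csum f g (I : Type) (s : seq I) (F : I -> R) :
  (forall i, F i \in C f g) -> \sum_(i <- s) F i \in C f g.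
Proof.
move=> h; elim: s => [|a s IH]; first by rewrite big_nil C0.
by rewrite big_cons CD.
Qed.
Lemma Cmul f g h x y : x \in C f g -> y \in C g h -> mul x y \in C f h.
Proof. by case: HR => _ [_ [_ []]] H _; apply: H. Qed.
Lemma Cmul0 f g g' h x y : g != g' -> x \in C f g -> y \in C g' h -> mul x y = 0.
Proof. by case: HR => _ [_ [_ [_ []]]] H _; apply: H. Qed.
Lemma one_in f : one f \in C f f.
Proof. by case: HR => _ [_ [_ [_ [_ H]]]]; case: (H f). Qed.
Lemma mulx1 f g x : x \in C g f -> mul x (one f) = x.
Proof. by case: HR => _ [_ [_ [_ [_ H]]]]; case: (H f) => _ [] H1 _; apply: H1. Qed.
Lemma mul1x f g x : x \in C f g -> mul (one f) x = x.
Proof. by case: HR => _ [_ [_ [_ [_ H]]]]; case: (H f) => _ [] _ H1; apply: H1. Qed.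
Lemma decomp0 x : exists (s : seq (G * G)) (y : G * G -> R),
      (forall i, i \in s -> y i \in C i.1 i.2) /\ x = \sum_(i <- s) y i.
Proof. by case: HR => _ [_ [[H _] _]]; apply: H. Qed.

Definition gcomp x f g := mul (mul (one f) x) (one g).

Lemma gcomp_C a b f g x : x \in C a b ->
  gcomp x f g = if (a, b) == (f, g) then x else 0.
Proof.
move=> xC; rewrite /gcomp xpair_eqE.
case: (eqVneq a f) => [<-|ne] /=.
  rewrite (mul1x xC); case: (eqVneq b g) => [<-|ne2].
    by rewrite (mulx1 xC).
  exact: (Cmul0 ne2 xC (one_in g)).
by rewrite eq_sym in ne; rewrite (Cmul0 ne (one_in f) xC) mul0l.
Qed.

Lemma gcompD x y f g : gcomp (x + y) f g = gcomp x f g + gcomp y f g.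
Proof. by rewrite /gcomp mulDr mulDl. Qed.
Lemma gcompZ a x f g : gcomp (a *: x) f g = a *: gcomp x f g.
Proof. by rewrite /gcomp mulZr mulZl. Qed.
Lemma gcomp0 f g : gcomp 0 f g = 0.
Proof. by rewrite /gcomp mul0r mul0l. Qed.
Lemma gcompN x f g : gcomp (- x) f g = - gcomp x f g.
Proof. by rewrite -scaleN1r gcompZ scaleN1r. Qed.
Lemma gcompB x y f g : gcomp (x - y) f g = gcomp x f g - gcomp y f g.
Proof. by rewrite gcompD gcompN. Qed.
Lemma gcomp_sum (I : Type) (s : seq I) (F : I -> R) f g :
  gcomp (\sum_(i <- s) F i) f g = \sum_(i <- s) gcomp (F i) f g.
Proof. by rewrite /gcomp mul_sumr mul_suml. Qed.

Lemma gcomp_in x f g : gcomp x f g \in C f g.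
Proof.
have [s [y [yC ->]]] := decomp0 x.
rewrite gcomp_sum big_seq big_mkcond; apply: Csum => i; case: ifP => [/yC yiC|_]; last exact: C0.
rewrite (gcomp_C _ _ yiC); case: eqP => [[<- <-]|_] //; exact: C0.
Qed.

Lemma decomp x : exists s : seq (G * G), uniq s /\
  (forall p, p \notin s -> gcomp x p.1 p.2 = 0) /\
  x = \sum_(p <- s) gcomp x p.1 p.2.
Proof.
have [s0 [y [yC ->]]] := decomp0 x.
have E p : gcomp (\sum_(i <- s0) y i) p.1 p.2 =
    \sum_(i <- s0) (if i == p then y i else 0).
  rewrite gcomp_sum big_seq [RHS]big_seq; apply: eq_bigr => i /yC iC.
  by rewrite (gcomp_C _ _ iC) -!surjective_pairing.
exists (undup s0); split; first exact: undup_uniq.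
split.
  move=> p; rewrite mem_undup => np; rewrite E big_seq big1 // => i is0.
  by case: eqP => // ei; move: np; rewrite -ei is0.
under [RHS]eq_bigr do rewrite E.
rewrite exchange_big /= big_seq [RHS]big_seq; apply: eq_bigr => i is0.
under eq_bigr do rewrite eq_sym.
by rewrite (sum_delta (fun _ => y i)) ?undup_uniq // mem_undup is0.
Qed.


Lemma gcomp_ext x y : (forall f g, gcomp x f g = gcomp y f g) -> x = y.
Proof.
move=> h; apply/eqP; rewrite -subr_eq0; apply/eqP.
have [s [_ [_ ->]]] := decomp (x - y).
by rewrite big1 // => p _; rewrite gcompB h subrr.
Qed.

Lemma gcomp_comp x f g a b :
  gcomp (gcomp x f g) a b = if (f, g) == (a, b) then gcomp x f g else 0.
Proof. exact: gcomp_C (gcomp_in x f g). Qed.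

Lemma in_C_of_comp x a b :
  (forall f g, (f, g) != (a, b) -> gcomp x f g = 0) -> x \in C a b.
Proof.
move=> h; suff -> : x = gcomp x a b by exact: gcomp_in.
apply: gcomp_ext => f g; rewrite gcomp_comp.
case: eqP => [[<- <-]|ne] //; rewrite h //; apply/eqP => -[e1 e2]; apply: ne.
by rewrite e1 e2.
Qed.

Lemma one_one a f : mul (one a) (one f) = if a == f then one f else 0.
Proof.
case: (eqVneq a f) => [->|ne]; first exact: (mul1x (one_in f)).
exact: (Cmul0 ne (one_in a) (one_in f)).
Qed.

Lemma gcomp_left x f a b :
  gcomp (mul (one f) x) a b = if f == a then gcomp x f b else 0.
Proof.
rewrite /gcomp mulA one_one eq_sym; case: eqP => [->|_]; last by rewrite !mul0l.
by [].
Qed.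

Lemma left_one_sum x f (s : seq G) : uniq s ->
  (forall g, g \notin s -> gcomp x f g = 0) ->
  mul (one f) x = \sum_(g <- s) gcomp x f g.
Proof.
move=> us hs; apply: gcomp_ext => a b.
rewrite gcomp_sum gcomp_left.
under eq_bigr do rewrite gcomp_comp xpair_eqE.
case: (eqVneq f a) => [fa|ne] /=; first subst a.
  rewrite (sum_delta (fun g => gcomp x f g)) //.
  by case: ifP => // /negbT /hs.
by rewrite big1.
Qed.

Lemma gcomp_mul x y f h (s : seq G) : uniq s ->
  (forall g, g \notin s -> gcomp x f g = 0) ->
  gcomp (mul x y) f h = \sum_(g <- s) mul (gcomp x f g) (gcomp y g h).
Proof.
move=> us hs; change (gcomp (mul x y) f h) with (mul (mul (one f) (mul x y)) (one h)).
rewrite mulA (left_one_sum us hs) mul_suml mul_suml.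
apply: eq_bigr => g _.
change (gcomp y g h) with (mul (mul (one g) y) (one h)).
by rewrite mulA (mulA _ (one g)) (mulx1 (gcomp_in x f g)).
Qed.

Section Morph.
Variables (psi : R -> R) (h : G).
Hypothesis Hpsi : is_kalg_morph mul mul psi.
Hypothesis Hdeg : graded_of_degree C C psi h.

Lemma psiD x y : psi (x + y) = psi x + psi y.
Proof. by case: Hpsi. Qed.
Lemma psiZ a x : psi (a *: x) = a *: psi x.
Proof. by case: Hpsi. Qed.
Lemma psiM x y : psi (mul x y) = mul (psi x) (psi y).
Proof. by case: Hpsi. Qed.
Lemma psi0 : psi 0 = 0.
Proof. by apply: (addrI (psi 0)); rewrite -psiD !addr0. Qed.
Lemma psi_sum (I : Type) (s : seq I) (F : I -> R) :
  psi (\sum_(i <- s) F i) = \sum_(i <- s) psi (F i).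
Proof.
elim: s => [|a s IH]; first by rewrite !big_nil psi0.
by rewrite !big_cons psiD IH.
Qed.

Lemma gcomp_psi y f g : psi (gcomp y f g) = gcomp (psi y) (h * f)%g (h * g)%g.
Proof.
have [s [us [hs ey]]] := decomp y.
rewrite [in RHS]ey psi_sum gcomp_sum.
have E p : gcomp (psi (gcomp y p.1 p.2)) (h * f)%g (h * g)%g =
    if p == (f, g) then psi (gcomp y p.1 p.2) else 0.
  rewrite (gcomp_C _ _ (Hdeg (gcomp_in y p.1 p.2))) !xpair_eqE.
  rewrite !(inj_eq (@mulgI _ h)) -xpair_eqE -surjective_pairing //.
under eq_bigr do rewrite E.
rewrite (sum_delta (fun p => psi (gcomp y p.1 p.2))) //.
case: ifP => // /negbT /hs /= ->; exact: psi0.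
Qed.

End Morph.

Section Inverse.
Variables (psi psi' : R -> R) (h : G).
Hypothesis Hpsi : is_kalg_morph mul mul psi.
Hypothesis Hdeg : graded_of_degree C C psi h.
Hypothesis K1 : cancel psi psi'.
Hypothesis K2 : cancel psi' psi.

Lemma inv_degree : graded_of_degree C C psi' (h^-1)%g.
Proof.
move=> a b x xC; apply: in_C_of_comp => f g ne.
have E := gcomp_psi Hpsi Hdeg (psi' x) f g.
rewrite K2 (gcomp_C _ _ xC) in E.
case: eqP E => [[ea eb]|_] E.
  by case/eqP: ne; rewrite ea eb !mulKg.
by rewrite -(K1 (gcomp (psi' x) f g)) E -{1}(psi0 Hpsi) K1.
Qed.

Lemma psi_one f : psi (one f) = one (h * f)%g.
Proof.
have u1 : psi (one f) \in C (h * f)%g (h * f)%g := Hdeg (one_in f).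
rewrite -(mulx1 u1).
have v : psi' (one (h * f)%g) \in C f f.
  by have := inv_degree (one_in (h * f)%g); rewrite mulKg.
by rewrite -{1}(K2 (one (h * f)%g)) -(psiM Hpsi) (mul1x v) K2.
Qed.

End Inverse.

End GAlg.


Section Fwd.
Variables (k : comPzRingType) (G : groupType) (R : lmodType k)
  (mul : R -> R -> R) (C : G -> G -> pred R) (one : G -> R).
Hypothesis HR : is_Galgebra mul C one.
Variables (A : lmodType k) (mulA : A -> A -> A) (oneA : A) (Ag : G -> pred A)
  (phi : R -> G -> G -> A).
Hypothesis HA : is_Ggraded_kalg mulA oneA Ag.
Hypothesis Hphi : Galg_iso_bar mul one mulA oneA Ag phi.

Lemma mulA1x x : mulA oneA x = x.
Proof. by case: HA => -[]. Qed.
Lemma mulAx1 x : mulA x oneA = x.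
Proof. by case: HA => -[]. Qed.
Lemma mulADl x y z : mulA (x + y) z = mulA x z + mulA y z.
Proof. by case: HA => -[] []. Qed.
Lemma mulADr x y z : mulA x (y + z) = mulA x y + mulA x z.
Proof. by case: HA => -[] []. Qed.
Lemma mulA0l y : mulA 0 y = 0.
Proof. by apply: (addrI (mulA 0 y)); rewrite -mulADl !addr0. Qed.
Lemma mulA0r y : mulA y 0 = 0.
Proof. by apply: (addrI (mulA y 0)); rewrite -mulADr !addr0. Qed.
Lemma Ag0 g : 0 \in Ag g.
Proof. by case: HA => _ H _ _; case: (H g). Qed.

Lemma phiD x y f g : phi (x + y) f g = phi x f g + phi y f g.
Proof. by case: Hphi. Qed.
Lemma phiZ a x f g : phi (a *: x) f g = a *: phi x f g.
Proof. by case: Hphi => _ []. Qed.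
Lemma phi_inj x y : (forall f g, phi x f g = phi y f g) -> x = y.
Proof. by case: Hphi => _ [_ [H _]]; apply: H. Qed.
Lemma phi_bar x : in_bar Ag (phi x).
Proof. by case: Hphi => _ [_ [_ [H _]]]. Qed.
Lemma phi_surj z : in_bar Ag z -> exists x, forall f g, phi x f g = z f g.
Proof. by case: Hphi => _ [_ [_ [_ [H _]]]]; apply: H. Qed.
Lemma phiM x y f h (s : seq G) : uniq s ->
  (forall g, g \notin s -> phi x f g = 0) ->
  phi (mul x y) f h = \sum_(g <- s) mulA (phi x f g) (phi y g h).
Proof. by case: Hphi => _ [_ [_ [_ [_ [H _]]]]]; apply: H. Qed.
Lemma phi_one f f' g' :
  phi (one f) f' g' = if (f' == f) && (g' == f) then oneA else 0.
Proof. by case: Hphi => _ [_ [_ [_ [_ [_ H]]]]]; apply: H. Qed.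
Lemma phi0 f g : phi 0 f g = 0.
Proof. by apply: (addrI (phi 0 f g)); rewrite -phiD !addr0. Qed.

Lemma row_supp x a : exists s : seq G, uniq s /\ forall c, c \notin s -> phi x a c = 0.
Proof.
have [[s0 hs0] _] := phi_bar x.
exists (undup (map snd s0)); split; first exact: undup_uniq.
move=> c; rewrite mem_undup => nc; apply: hs0; apply: contra nc => ac.
by apply/mapP; exists (a, c).
Qed.

Lemma phi_left y f a b :
  phi (mul (one f) y) a b = if a == f then phi y a b else 0.
Proof.
have u : uniq [:: f] by [].
rewrite (@phiM _ _ _ _ [:: f] u); last first.
  by move=> g; rewrite inE => ng; rewrite phi_one (negbTE ng) andbF.
rewrite big_seq1 phi_one eqxx andbT.
by case: eqP => [->|_]; rewrite ?mulA1x ?mulA0l.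
Qed.

Lemma phi_right y h a b :
  phi (mul y (one h)) a b = if b == h then phi y a b else 0.
Proof.
have [s [us hs]] := row_supp y a.
rewrite (@phiM y (one h) a b s us hs).
under eq_bigr do rewrite phi_one.
case: (eqVneq b h) => [->|nb].
  under eq_bigr do rewrite andbT (fun_if (mulA _)) mulAx1 mulA0r.
  rewrite (sum_delta (fun g => phi y a g)) //.
  by case: ifP => // /negbT /hs.
by rewrite big1 // => g _; rewrite andbF mulA0r.
Qed.

Lemma phi_comp x f g a b :
  phi (gcomp mul one x f g) a b = if (a == f) && (b == g) then phi x a b else 0.
Proof.
rewrite /gcomp phi_right phi_left.
by case: (a == f); case: (b == g).
Qed.

Lemma phi_C x f g a b : x \in C f g ->
  phi x a b = if (a == f) && (b == g) then phi x a b else 0.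
Proof.
move=> xC; have e : gcomp mul one x f g = x by rewrite (gcomp_C HR f g xC) eqxx.
by rewrite -{1}e phi_comp.
Qed.

Lemma C_of_phi y f g :
  (forall a b, ~~ ((a == f) && (b == g)) -> phi y a b = 0) -> y \in C f g.
Proof.
move=> h; suff -> : y = gcomp mul one y f g by exact: gcomp_in.
apply: phi_inj => a b; rewrite phi_comp.
by case: ifP => // /negbT /h.
Qed.


Lemma FTex g x : exists x', forall a b, phi x' a b = phi x (g^-1 * a)%g (g^-1 * b)%g.
Proof.
apply: phi_surj; split.
  have [[s0 hs0] _] := phi_bar x.
  exists (map (fun p => (g * p.1, g * p.2)%g) s0) => a b nab; apply: hs0.
  apply: contra nab => H; apply/mapP; exists ((g^-1 * a)%g, (g^-1 * b)%g) => //=.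
  by rewrite !mulVKg.
move=> a b; have [_ H] := phi_bar x.
by have := H (g^-1 * a)%g (g^-1 * b)%g; rewrite invgM invgK -mulgA mulVKg.
Qed.

Definition FT g x := proj1_sig (constructive_indefinite_description _ (FTex g x)).

Lemma FTP g x a b : phi (FT g x) a b = phi x (g^-1 * a)%g (g^-1 * b)%g.
Proof. exact: (proj2_sig (constructive_indefinite_description _ (FTex g x))). Qed.

Lemma FT_morph g : is_kalg_morph mul mul (FT g).
Proof.
split.
- by move=> x y; apply: phi_inj => a b; rewrite phiD !FTP phiD.
- by move=> c x; apply: phi_inj => a b; rewrite phiZ !FTP phiZ.
move=> x y; apply: phi_inj => a b.
have [s [us hs]] := row_supp x (g^-1 * a)%g.
rewrite FTP (@phiM x y (g^-1 * a)%g (g^-1 * b)%g s us hs).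
have us' : uniq (map (fun c => g * c)%g s) by rewrite map_inj_uniq //; exact: mulgI.
have hs' : forall c, c \notin map (fun c => g * c)%g s -> phi (FT g x) a c = 0.
  move=> c nc; rewrite FTP hs //; apply: contra nc => H; apply/mapP.
  by exists (g^-1 * c)%g => //; rewrite mulVKg.
rewrite (@phiM (FT g x) (FT g y) a b _ us' hs') big_map; apply: eq_bigr => c _.
by rewrite !FTP mulKg.
Qed.

Lemma FT_hom g h x : FT (g * h)%g x = FT g (FT h x).
Proof. by apply: phi_inj => a b; rewrite !FTP invgM -!mulgA. Qed.

Lemma FT1 x : FT 1%g x = x.
Proof. by apply: phi_inj => a b; rewrite FTP invg1 !mul1g. Qed.

Lemma FT_aut g : is_kalg_aut mul (FT g).
Proof.
split; first exact: FT_morph.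
by exists (FT g^-1) => x; rewrite -FT_hom ?mulVg ?mulgV FT1.
Qed.

Lemma FT_deg g : graded_of_degree C C (FT g) g.
Proof.
move=> f h x xC; apply: C_of_phi => a b nab.
rewrite FTP (@phi_C x f h (g^-1 * a)%g (g^-1 * b)%g xC).
case: ifP => [/andP [/eqP e1 /eqP e2]|//].
by rewrite -e1 -e2 !mulVKg !eqxx in nab.
Qed.

Lemma FT_inj (nz : exists x : R, x != 0) g h : (forall x, FT g x = FT h x) -> g = h.
Proof.
case: nz => x nx.
have [a [b nab]] : exists a b, phi x a b != 0.
  apply: NNPP => H; move/eqP: nx; apply; apply: phi_inj => a b.
  rewrite phi0; apply/eqP; apply: contraT => ne; exfalso; apply: H.
  by exists a, b.
have [y hy] : exists y, forall f g', phi y f g' = if (f == a) && (g' == b) then phi x a b else 0.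
  apply: phi_surj; split.
    by exists [:: (a, b)] => f g'; rewrite inE xpair_eqE => /negbTE ->.
  move=> f g'; case: ifP => [/andP [/eqP -> /eqP ->]|_]; last exact: Ag0.
  by case: (phi_bar x).
move=> E; have := congr1 (fun z => phi z (g * a)%g (g * b)%g) (E y) => /=.
rewrite !FTP !hy !mulKg !eqxx /=.
case: ifP => [/andP [/eqP e _] _|_ /eqP]; last by rewrite (negbTE nab).
have e2 : (h^-1 * g)%g = 1%g by apply: (@mulIg _ a); rewrite mul1g -mulgA.
by rewrite -(mulVKg h g) e2 mulg1.
Qed.

End Fwd.

Lemma fwd (k : comPzRingType) (G : groupType) (R : lmodType k)
  (mul : R -> R -> R) (C : G -> G -> pred R) (one : G -> R) :
  is_Galgebra mul C one -> principal mul one ->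
  exists FT : G -> R -> R,
    [/\ (forall g, is_kalg_aut mul (FT g)),
        (forall g h x, FT (g * h)%g x = FT g (FT h x)),
        (forall g, graded_of_degree C C (FT g) g) &
        ((exists x : R, x != 0) -> forall g h, (forall x, FT g x = FT h x) -> g = h)].
Proof.
move=> HR [A [mulA [oneA [Ag [HA [phi Hphi]]]]]].
exists (FT Hphi); split.
- exact: FT_aut.
- exact: FT_hom.
- move=> g; apply: FT_deg => //.  
- move=> nz g h; apply: FT_inj => //.
Qed.


Section SubAlg.
Variables (k : comPzRingType) (R : lmodType k) (mul : R -> R -> R) (e : R).

Definition Atype (_ : is_kalg_nonunital mul) : Type := {x : R | mul e x == x}.
Variable Hm : is_kalg_nonunital mul.

HB.instance Definition _ := Choice.copy (Atype Hm) {x : R | mul e x == x}.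

Let mD x y : mul e (x + y) = mul e x + mul e y.
Proof. by case: Hm. Qed.
Let mZ a x : mul e (a *: x) = a *: mul e x.
Proof. by case: Hm. Qed.
Let m0 : mul e 0 = 0.
Proof. by apply: (addrI (mul e 0)); rewrite -mD !addr0. Qed.
Let mN x : mul e (- x) = - mul e x.
Proof. by rewrite -scaleN1r mZ scaleN1r. Qed.

Definition Aval (a : Atype Hm) : R := proj1_sig a.
Lemma AvalP (a : Atype Hm) : mul e (Aval a) = Aval a.
Proof. by apply/eqP; exact: (proj2_sig a). Qed.
Lemma Aval_inj : injective Aval.
Proof.
move=> [x hx] [y hy] /= exy; subst y; congr exist; exact: eq_irrelevance.
Qed.

Definition Amk x (h : mul e x = x) : Atype Hm := exist _ x (introT eqP h).
Lemma AmkK x h : Aval (@Amk x h) = x. Proof. by []. Qed.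

Fact A0P : mul e 0 = 0. Proof. exact: m0. Qed.
Definition Azero := Amk A0P.
Fact AoppP (a : Atype Hm) : mul e (- Aval a) = - Aval a.
Proof. by rewrite mN AvalP. Qed.
Definition Aopp a := Amk (AoppP a).
Fact AaddP (a b : Atype Hm) : mul e (Aval a + Aval b) = Aval a + Aval b.
Proof. by rewrite mD !AvalP. Qed.
Definition Aadd a b := Amk (AaddP a b).
Fact AscaleP c (a : Atype Hm) : mul e (c *: Aval a) = c *: Aval a.
Proof. by rewrite mZ AvalP. Qed.
Definition Ascale c a := Amk (AscaleP c a).

Fact Aadd_assoc : associative Aadd.
Proof. by move=> a b c; apply: Aval_inj; rewrite /= addrA. Qed.
Fact Aadd_comm : commutative Aadd.
Proof. by move=> a b; apply: Aval_inj; rewrite /= addrC. Qed.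
Fact Aadd0 : left_id Azero Aadd.
Proof. by move=> a; apply: Aval_inj; rewrite /= add0r. Qed.
Fact AaddN : left_inverse Azero Aopp Aadd.
Proof. by move=> a; apply: Aval_inj; rewrite /= addNr. Qed.

HB.instance Definition _ := GRing.isZmodule.Build (Atype Hm)
  Aadd_assoc Aadd_comm Aadd0 AaddN.

Fact AscaleA c d a : Ascale c (Ascale d a) = Ascale (c * d) a.
Proof. by apply: Aval_inj; rewrite /= scalerA. Qed.
Fact Ascale1 : left_id 1 Ascale.
Proof. by move=> a; apply: Aval_inj; rewrite /= scale1r. Qed.
Fact AscaleDr : right_distributive Ascale +%R.
Proof. by move=> c a b; apply: Aval_inj; rewrite /= scalerDr. Qed.
Fact AscaleDl a : {morph Ascale^~ a : c d / c + d}.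
Proof. by move=> c d; apply: Aval_inj; rewrite /= scalerDl. Qed.

HB.instance Definition _ := GRing.Zmodule_isLmodule.Build k (Atype Hm)
  AscaleA Ascale1 AscaleDr AscaleDl.

Lemma AvalD (a b : Atype Hm) : Aval (a + b) = Aval a + Aval b. Proof. by []. Qed.
Lemma AvalZ c (a : Atype Hm) : Aval (c *: a) = c *: Aval a. Proof. by []. Qed.
Lemma Aval0 : Aval (0 : Atype Hm) = 0. Proof. by []. Qed.
Lemma Aval_sum (I : Type) (s : seq I) (F : I -> Atype Hm) :
  Aval (\sum_(i <- s) F i) = \sum_(i <- s) Aval (F i).
Proof.
elim: s => [|a s IH]; first by rewrite !big_nil.
by rewrite !big_cons AvalD IH.
Qed.

End SubAlg.



Section Bwd.
Variables (k : comPzRingType) (G : groupType) (R : lmodType k)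
  (mul : R -> R -> R) (C : G -> G -> pred R) (one : G -> R).
Hypothesis HR : is_Galgebra mul C one.
Variable T : G -> R -> R.
Hypothesis HTa : forall g, is_kalg_aut mul (T g).
Hypothesis HTh : forall g h x, T (g * h)%g x = T g (T h x).
Hypothesis HTd : forall g, graded_of_degree C C (T g) g.

Let Tm g : is_kalg_morph mul mul (T g). Proof. by case: (HTa g). Qed.
Lemma TD g x y : T g (x + y) = T g x + T g y. Proof. have := @psiD _ _ _ _ (Tm g) x y. exact. Qed.
Lemma TZ g a x : T g (a *: x) = a *: T g x. Proof. exact: (@psiZ _ _ _ _ (Tm g)). Qed.
Lemma TM g x y : T g (mul x y) = mul (T g x) (T g y). Proof. exact: (@psiM _ _ _ _ (Tm g)). Qed.
Lemma T0 g : T g 0 = 0. Proof. exact: (@psi0 _ _ _ _ (Tm g)). Qed.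
Lemma Tsum g (I : Type) (s : seq I) (F : I -> R) :
  T g (\sum_(i <- s) F i) = \sum_(i <- s) T g (F i).
Proof. exact: (@psi_sum _ _ _ _ (Tm g)). Qed.
Lemma T_inj g : injective (T g).
Proof. by case: (HTa g) => _ /bij_inj. Qed.
Lemma T1 x : T 1%g x = x.
Proof. by apply: (@T_inj 1%g); rewrite -HTh mulg1. Qed.
Lemma TK g : cancel (T g) (T g^-1).
Proof. by move=> x; rewrite -HTh mulVg T1. Qed.
Lemma TKV g : cancel (T g^-1) (T g).
Proof. by move=> x; rewrite -HTh mulgV T1. Qed.
Lemma T_one g f : T g (one f) = one (g * f)%g.
Proof. have := @psi_one _ _ _ _ _ _ HR _ _ _ (Tm g) (HTd g) (TK g) (TKV g) f. exact. Qed.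

Let Hm : is_kalg_nonunital mul. Proof. by case: HR. Qed.
Local Notation e := (one 1%g).
Local Notation A := (Atype e Hm).

Lemma ee y : mul e (mul e y) = mul e y.
Proof. by rewrite (mulA HR) (mul1x HR (one_in HR 1%g)). Qed.
Definition Ain (y : R) : A := Amk Hm (ee y).
Lemma AinE y : Aval (Ain y) = mul e y. Proof. by []. Qed.
Lemma AinC h y : y \in C 1%g h -> Aval (Ain y) = y.
Proof. by move=> yC; rewrite AinE (mul1x HR yC). Qed.

Definition rowc (a : A) g := mul (Aval a) (one g).
Lemma rowcE a g : rowc a g = gcomp mul one (Aval a) 1%g g.
Proof. by rewrite /gcomp (AvalP a). Qed.
Lemma rowc_in a g : rowc a g \in C 1%g g.
Proof. by rewrite rowcE; exact: gcomp_in. Qed.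
Lemma rowcD a b g : rowc (a + b) g = rowc a g + rowc b g.
Proof. by rewrite /rowc AvalD (mulDl HR). Qed.
Lemma rowcZ c a g : rowc (c *: a) g = c *: rowc a g.
Proof. by rewrite /rowc AvalZ (mulZl HR). Qed.

Definition sup (a : A) (s : seq G) := forall g, g \notin s -> rowc a g = 0.

Lemma sup_ex a : exists s, uniq s /\ sup a s.
Proof.
have [s2 [_ [hs _]]] := decomp HR (Aval a).
exists (undup (map snd s2)); split; first exact: undup_uniq.
move=> g; rewrite mem_undup => ng; rewrite rowcE; apply: (hs (1%g, g)).
by apply: contra ng => H; apply/mapP; exists (1%g, g).
Qed.

Definition Ssup a := proj1_sig (constructive_indefinite_description _ (sup_ex a)).
Lemma S_uniq a : uniq (Ssup a).
Proof. by case: (proj2_sig (constructive_indefinite_description _ (sup_ex a))). Qed.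
Lemma S_sup a : sup a (Ssup a).
Proof. by case: (proj2_sig (constructive_indefinite_description _ (sup_ex a))). Qed.

Lemma sup_sub a s t : sup a s -> {subset s <= t} -> sup a t.
Proof. by move=> h st g ng; apply: h; apply: contra ng; apply: st. Qed.

Lemma a_sum a s : uniq s -> sup a s -> Aval a = \sum_(g <- s) rowc a g.
Proof.
move=> us hs; rewrite -{1}(AvalP a) (left_one_sum HR us).
  by apply: eq_bigr => g _; rewrite rowcE.
by move=> g /hs; rewrite rowcE.
Qed.

Definition mulRR (a b : A) := \sum_(g <- Ssup a) mul (rowc a g) (T g (Aval b)).
Lemma mulR_P a b : mul e (mulRR a b) = mulRR a b.
Proof.
rewrite /mulRR (mul_sumr HR); apply: eq_bigr => g _.
by rewrite (mulA HR) /rowc (mulA HR) (AvalP a).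
Qed.
Definition mulAA a b : A := Amk Hm (mulR_P a b).

Lemma mulAA_any a b s : uniq s -> sup a s ->
  Aval (mulAA a b) = \sum_(g <- s) mul (rowc a g) (T g (Aval b)).
Proof.
move=> us hs; rewrite AmkK /mulRR; apply: sum_supp_eq => //; first exact: S_uniq.
  by move=> g /S_sup ->; rewrite (mul0l HR).
by move=> g /hs ->; rewrite (mul0l HR).
Qed.


Lemma sup_D a b s : sup a s -> sup b s -> sup (a + b) s.
Proof. by move=> ha hb g ng; rewrite rowcD ha ?hb ?addr0. Qed.
Lemma sup_Z c a s : sup a s -> sup (c *: a) s.
Proof. by move=> ha g ng; rewrite rowcZ ha ?scaler0. Qed.

Lemma mulAA_Dl a b c : mulAA (a + b) c = mulAA a c + mulAA b c.
Proof.
apply: Aval_inj; set s := undup (Ssup a ++ Ssup b).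
have us : uniq s := undup_uniq _.
have sa : {subset Ssup a <= s} by move=> g hg; rewrite mem_undup mem_cat hg.
have sb : {subset Ssup b <= s} by move=> g hg; rewrite mem_undup mem_cat hg orbT.
have ha : sup a s := sup_sub (@S_sup a) sa.
have hb : sup b s := sup_sub (@S_sup b) sb.
rewrite AvalD (@mulAA_any (a + b) c s us (sup_D ha hb)) (@mulAA_any a c s us ha).
rewrite (@mulAA_any b c s us hb) -big_split; apply: eq_bigr => g _.
by rewrite rowcD (mulDl HR).
Qed.

Lemma mulAA_Dr a b c : mulAA a (b + c) = mulAA a b + mulAA a c.
Proof.
apply: Aval_inj.
rewrite AvalD !(@mulAA_any a _ (Ssup a) (S_uniq a) (@S_sup a)) -big_split.
by apply: eq_bigr => g _; rewrite AvalD TD (mulDr HR).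
Qed.

Lemma mulAA_Zl c a b : mulAA (c *: a) b = c *: mulAA a b.
Proof.
apply: Aval_inj.
rewrite AvalZ (@mulAA_any (c *: a) b (Ssup a) (S_uniq a) (sup_Z c (@S_sup a))).
rewrite (@mulAA_any a b (Ssup a) (S_uniq a) (@S_sup a)) scaler_sumr.
by apply: eq_bigr => g _; rewrite rowcZ (mulZl HR).
Qed.

Lemma mulAA_Zr c a b : mulAA a (c *: b) = c *: mulAA a b.
Proof.
apply: Aval_inj.
rewrite AvalZ !(@mulAA_any a _ (Ssup a) (S_uniq a) (@S_sup a)) scaler_sumr.
by apply: eq_bigr => g _; rewrite AvalZ TZ (mulZr HR).
Qed.

Lemma rowc_mulAA a b m :
  rowc (mulAA a b) m = \sum_(h <- Ssup a) mul (rowc a h) (T h (rowc b (h^-1 * m)%g)).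
Proof.
rewrite {1}/rowc (@mulAA_any a b (Ssup a) (S_uniq a) (@S_sup a)) (mul_suml HR).
apply: eq_bigr => h _; rewrite -(mulA HR); congr (mul _ _).
by rewrite /rowc TM T_one mulVKg.
Qed.

Lemma mulAA_assoc a b c : mulAA a (mulAA b c) = mulAA (mulAA a b) c.
Proof.
apply: Aval_inj.
set s' := undup (Ssup (mulAA a b) ++ [seq (h * g)%g | h <- Ssup a, g <- Ssup b]).
have us' : uniq s' := undup_uniq _.
have ss : {subset Ssup (mulAA a b) <= s'} by move=> g hg; rewrite mem_undup mem_cat hg.
have hs' : sup (mulAA a b) s' := sup_sub (@S_sup _) ss.
rewrite (@mulAA_any (mulAA a b) c s' us' hs').
rewrite (@mulAA_any a (mulAA b c) (Ssup a) (S_uniq a) (@S_sup a)).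
under [RHS]eq_bigr do rewrite rowc_mulAA (mul_suml HR).
rewrite [RHS]exchange_big /= big_seq [RHS]big_seq; apply: eq_bigr => h hsa.
change (mulRR b c) with (Aval (mulAA b c)). rewrite (@mulAA_any b c (Ssup b) (S_uniq b) (@S_sup b)) Tsum (mul_sumr HR).
have Z : forall m, (h^-1 * m)%g \notin Ssup b ->
    mul (mul (rowc a h) (T h (rowc b (h^-1 * m)%g))) (T m (Aval c)) = 0.
  by move=> m /S_sup ->; rewrite T0 (mul0r HR) (mul0l HR).
rewrite [RHS](@sum_supp_eq _ _ s' (map (fun g => (h * g)%g) (Ssup b))) //.
- rewrite big_map; apply: eq_bigr => g _.
  by rewrite mulKg TM -HTh (mulA HR).
- by rewrite map_inj_uniq ?S_uniq //; exact: mulgI.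
- move=> m nm; apply: Z; apply: contra nm => H.
  rewrite mem_undup mem_cat; apply/orP; right.
  by rewrite -[m](mulVKg h); apply: allpairs_f.
- move=> m nm; apply: Z; apply: contra nm => H.
  by apply/mapP; exists (h^-1 * m)%g; rewrite ?mulVKg.
Qed.


Fact oneP : mul e e = e.
Proof. exact: (mul1x HR (one_in HR 1%g)). Qed.
Definition oneAA : A := Amk Hm oneP.

Lemma rowc_C a m : Aval a \in C 1%g m -> rowc a m = Aval a.
Proof. by move=> aC; rewrite /rowc (mulx1 HR aC). Qed.

Lemma sup_C a m : Aval a \in C 1%g m -> sup a [:: m].
Proof.
move=> aC g; rewrite inE => ng; rewrite /rowc.
by rewrite eq_sym in ng; apply: (Cmul0 HR ng aC (one_in HR g)).
Qed.

Lemma mulAA_C a b m : Aval a \in C 1%g m ->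
  Aval (mulAA a b) = mul (Aval a) (T m (Aval b)).
Proof.
move=> aC; rewrite (@mulAA_any a b [:: m] erefl (sup_C aC)) big_seq1.
by rewrite rowc_C.
Qed.

Lemma mulAA_1l b : mulAA oneAA b = b.
Proof.
apply: Aval_inj; rewrite (@mulAA_C oneAA b 1%g (one_in HR 1%g)) T1.
exact: AvalP.
Qed.

Lemma mulAA_1r a : mulAA a oneAA = a.
Proof.
apply: Aval_inj; rewrite (@mulAA_any a oneAA (Ssup a) (S_uniq a) (@S_sup a)).
rewrite (a_sum (S_uniq a) (@S_sup a)); apply: eq_bigr => g _.
by rewrite AmkK T_one mulg1 (mulx1 HR (rowc_in a g)).
Qed.

Definition Ag (h : G) : pred A := [pred a : A | Aval a \in C 1%g h].
Lemma AgE h a : (a \in Ag h) = (Aval a \in C 1%g h). Proof. by []. Qed.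

Lemma A_graded : is_Ggraded_kalg mulAA oneAA Ag.
Proof.
split.
- split; [ | exact: mulAA_1l | exact: mulAA_1r].
  split; [exact: mulAA_Dl | exact: mulAA_Dr | exact: mulAA_Zl | exact: mulAA_Zr |].
  move=> x y z; exact: mulAA_assoc.
- move=> h; split.
  + by rewrite AgE Aval0 (C0 HR).
  + by move=> x y; rewrite !AgE => hx hy; rewrite AvalD (CD HR).
  + by move=> c x; rewrite !AgE => hx; rewrite AvalZ (CZ HR).
- split.
  + move=> a; exists (Ssup a), (fun g => Ain (rowc a g)); split.
      by move=> g _; rewrite AgE (AinC (rowc_in a g)) rowc_in.
    apply: Aval_inj; rewrite Aval_sum (a_sum (S_uniq a) (@S_sup a)).
    by apply: eq_bigr => g _; rewrite (AinC (rowc_in a g)).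
  + move=> s y us hy hs i is_.
    apply: Aval_inj; rewrite Aval0.
    have := congr1 (fun z => gcomp mul one (Aval z) 1%g i) hs.
    rewrite Aval_sum Aval0 (gcomp0 HR) (gcomp_sum HR) /=.
    have E : \sum_(j <- s) gcomp mul one (Aval (y j)) 1%g i =
        \sum_(j <- s) (if j == i then Aval (y j) else 0).
      rewrite big_seq [RHS]big_seq; apply: eq_bigr => j js.
      have yC : Aval (y j) \in C 1%g j by rewrite -AgE; apply: hy.
      by rewrite (gcomp_C HR _ _ yC) xpair_eqE eqxx.
    by rewrite E (sum_delta (fun j => Aval (y j))) // is_.
- move=> g h x y; rewrite !AgE => xC yC; rewrite (mulAA_C _ xC).
  by apply: (Cmul HR xC); have := HTd g yC; rewrite mulg1.
Qed.


Lemma phi_in x f g : T f^-1 (gcomp mul one x f g) \in C 1%g (f^-1 * g)%g.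
Proof. by have := HTd f^-1 (gcomp_in HR x f g); rewrite mulVg. Qed.

Definition phiA x f g : A := Ain (T f^-1 (gcomp mul one x f g)).
Lemma Aval_phi x f g : Aval (phiA x f g) = T f^-1 (gcomp mul one x f g).
Proof. exact: AinC (phi_in x f g). Qed.

Lemma phiA_in x f g : Aval (phiA x f g) \in C 1%g (f^-1 * g)%g.
Proof. by rewrite Aval_phi; exact: phi_in. Qed.

Lemma iso : Galg_iso_bar mul one mulAA oneAA Ag phiA.
Proof.
split.
  by move=> x y f g; apply: Aval_inj; rewrite AvalD !Aval_phi (gcompD HR) TD.
split.
  by move=> c x f g; apply: Aval_inj; rewrite AvalZ !Aval_phi (gcompZ HR) TZ.
split.
  move=> x y h; apply: (gcomp_ext HR) => f g; apply: (@T_inj f^-1).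
  by rewrite -!Aval_phi h.
split.
  move=> x; split.
    have [s [_ [hs _]]] := decomp HR x.
    exists s => f g nfg; apply: Aval_inj.
    by rewrite Aval_phi Aval0 (hs (f, g) nfg) T0.
  by move=> f g; rewrite AgE Aval_phi; exact: phi_in.
split.
  move=> z [[s0 hs0] hz].
  have hzC : forall f g, T f (Aval (z f g)) \in C f g.
    move=> f g; have := hz f g; rewrite AgE => zC.
    by have := HTd f zC; rewrite mulg1 mulVKg.
  exists (\sum_(p <- undup s0) T p.1 (Aval (z p.1 p.2))) => a b.
  apply: Aval_inj; rewrite Aval_phi (gcomp_sum HR).
  have E : \sum_(p <- undup s0) gcomp mul one (T p.1 (Aval (z p.1 p.2))) a b =
      \sum_(p <- undup s0) (if p == (a, b) then T p.1 (Aval (z p.1 p.2)) else 0).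
    by apply: eq_bigr => p _; rewrite (gcomp_C HR _ _ (hzC p.1 p.2)) -surjective_pairing.
  rewrite E (sum_delta (fun p => T p.1 (Aval (z p.1 p.2)))) ?undup_uniq //= mem_undup.
  case: ifP => [_|/negbT nab]; first exact: TK.
  by rewrite T0 hs0.
split.
  move=> x y f h s us hs.
  have hs2 : forall g, g \notin s -> gcomp mul one x f g = 0.
    move=> g /hs E; apply: (@T_inj f^-1); rewrite T0 -Aval_phi E.
    by [].
  apply: Aval_inj; rewrite Aval_phi (gcomp_mul HR y h us hs2) Tsum Aval_sum.
  apply: eq_bigr => g _.
  rewrite (mulAA_C _ (phiA_in x f g)) !Aval_phi TM; congr (mul _ _).
  by rewrite -HTh mulgK.
move=> f f' g'; apply: Aval_inj; rewrite Aval_phi (gcomp_C HR _ _ (one_in HR f)).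
rewrite xpair_eqE !(eq_sym f).
case: ifP => [/andP [/eqP -> _]|_]; first by rewrite T_one mulVg.
by rewrite T0.
Qed.

Lemma bwd_principal : principal mul one.
Proof.
exists A, mulAA, oneAA, Ag; split; first exact: A_graded.
by exists phiA; exact: iso.
Qed.

End Bwd.



Section Zalg.
Variables (k : comPzRingType) (R : lmodType k)
  (mul : R -> R -> R) (C : Zgrp -> Zgrp -> pred R) (one : Zgrp -> R).
Hypothesis HR : is_Galgebra mul C one.
Variables (psi psi' : R -> R).
Hypothesis Hpsi : is_kalg_morph mul mul psi.
Hypothesis Hdeg : graded_of_degree C C psi Zgrp_one.
Hypothesis K1 : cancel psi psi'.
Hypothesis K2 : cancel psi' psi.

Lemma Hpsi' : is_kalg_morph mul mul psi'.
Proof.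
split.
- by move=> x y; apply: (can_inj K1); rewrite (psiD Hpsi) !K2.
- by move=> a x; apply: (can_inj K1); rewrite (psiZ Hpsi) !K2.
- by move=> x y; apply: (can_inj K1); rewrite (psiM Hpsi) !K2.
Qed.

Lemma Hdeg' : graded_of_degree C C psi' (Zgrp_one^-1)%g.
Proof. have := @inv_degree _ _ _ _ _ _ HR psi psi' Zgrp_one Hpsi Hdeg K1 K2. exact. Qed.

Definition Tz (n : Zgrp) (x : R) : R :=
  match n with Posz m => iter m psi x | Negz m => iter m.+1 psi' x end.

Lemma TzS (n : int) x : Tz (n + 1) x = psi (Tz n x).
Proof.
case: n => [m|m] /=.
  by rewrite addn1 iterS.
case: m => [|m] /=; first by rewrite K2.
by rewrite subn1 /= K2.
Qed.

Lemma TzP (n : int) x : Tz (n - 1) x = psi' (Tz n x).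
Proof. by rewrite -{2}(subrK 1 n) TzS K1. Qed.


Lemma int_ind3 (P : int -> Prop) : P 0 -> (forall n, P n -> P (n + 1)) ->
  (forall n, P n -> P (n - 1)) -> forall n, P n.
Proof.
move=> P0 PS PP; case=> p.
  elim: p => [|p IH] //; have -> : Posz p.+1 = Posz p + 1 by lia.
  exact: PS.
elim: p => [|p IH].
  have -> : Negz 0 = 0 - 1 by rewrite NegzE; lia.
  exact: PP.
have -> : Negz p.+1 = Negz p - 1 by rewrite !NegzE; lia.
exact: PP.
Qed.

Lemma Tz0 x : Tz 0 x = x. Proof. by []. Qed.

Lemma Tz_add (n m : int) x : Tz (n + m) x = Tz n (Tz m x).
Proof.
elim/int_ind3: n m x => [|n IH|n IH] m x.
- by rewrite add0r.
- by rewrite -addrA (addrC 1) addrA (TzS (n + m)) IH TzS.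
- by rewrite -addrA (addrC (-1)) addrA (TzP (n + m)) IH TzP.
Qed.

Lemma ZE1 (a : int) : (Zgrp_one * a)%g = a + 1.
Proof. by change (1 + a = a + 1); rewrite addrC. Qed.
Lemma ZE2 (a : int) : (Zgrp_one^-1 * a)%g = a - 1.
Proof. by change (- 1 + a = a - 1); rewrite addrC. Qed.

Lemma Tz_deg (n : int) f g x : x \in C f g -> Tz n x \in C (n + f) (n + g).
Proof.
elim/int_ind3: n f g x => [|n IH|n IH] f g x xC.
- by rewrite !add0r.
- rewrite TzS; have := Hdeg (IH _ _ _ xC).
  by rewrite !ZE1 -!addrA !(addrC 1) !addrA.
- rewrite TzP; have := Hdeg' (IH _ _ _ xC).
  by rewrite !ZE2 -!addrA !(addrC (-1)) !addrA.
Qed.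

Lemma Tz_morph (n : int) : is_kalg_morph mul mul (Tz n).
Proof.
elim/int_ind3: n => [|n IH|n IH].
- by split.
- case: IH => hD hZ hM; split.
  + by move=> x y; rewrite !TzS hD (psiD Hpsi).
  + by move=> a x; rewrite !TzS hZ (psiZ Hpsi).
  + by move=> x y; rewrite !TzS hM (psiM Hpsi).
- case: IH => hD hZ hM; split.
  + by move=> x y; rewrite !TzP hD (psiD Hpsi').
  + by move=> a x; rewrite !TzP hZ (psiZ Hpsi').
  + by move=> x y; rewrite !TzP hM (psiM Hpsi').
Qed.

Lemma Z_principal : principal mul one.
Proof.
apply: (@bwd_principal _ _ _ _ _ _ HR Tz).
- move=> n; split; first exact: Tz_morph.
  exists (Tz (- n)) => x; rewrite -Tz_add ?addNr ?addrN //.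
- by move=> g h x; exact: Tz_add.
- by move=> n f g x xC; exact: Tz_deg.
Qed.

End Zalg.

Unset Implicit Arguments. Set Strict Implicit.

Theorem proposition3p1 :
  (forall (k : comPzRingType) (G : groupType) (R : lmodType k)
          (mulR : R -> R -> R) (C : G -> G -> pred R) (oneR : G -> R),
     is_Galgebra mulR C oneR ->
     (exists x : R, x != 0) ->
     (principal mulR oneR <->
      exists T : G -> R -> R,
        [/\ (forall g, is_kalg_aut mulR (T g)),
            (forall g h x, T (g * h)%g x = T g (T h x)),
            (forall g h, (forall x, T g x = T h x) -> g = h) &
            (forall g, graded_of_degree C C (T g) g)])) /\
  (forall (k : comPzRingType) (R : lmodType k)
          (mulR : R -> R -> R) (C : Zgrp -> Zgrp -> pred R) (oneR : Zgrp -> R),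
     is_Galgebra mulR C oneR ->
     (principal mulR oneR <->
      exists psi : R -> R,
        is_kalg_aut mulR psi /\ graded_of_degree C C psi Zgrp_one)).
Proof.
split.
- move=> k G R mul C one HR nz; split.
  + move=> Hp; have [T [Ta Th Td Ti]] := fwd HR Hp.
    by exists T; split => //; exact: Ti nz.
  + by case=> T [Ta Th Ti Td]; have := bwd_principal HR Ta Th Td.
- move=> k R mul C one HR; split.
  + move=> Hp; have [T [Ta Th Td _]] := fwd HR Hp.
    by exists (T Zgrp_one); split; [exact: Ta | exact: Td].
  + case=> psi [[Hm [psi' K1 K2]] Hd].
    by have := Z_principal HR Hm Hd K1 K2.
Qed.
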